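(* Let $f=\prod_{i=1}^n(x-r_i)^{e_i}\in k[x]$ with $r_1,\ldots,r_n\in k$ pairwise distinct and $e_i\ge1$. Then \[\det\Sigma(f)=\pm\prod_{1\le i<j\le n}(r_i-r_j)^{e_ie_j},\qquad\text{hence}\qquad \mathfrak{D}(f)=\prod_{1\le i<j\le n}(r_i-r_j)^{2e_ie_j}.\]
   Context: Let $N=\sum_ie_i$. $\Sigma(f)$ is the $N\times N$ matrix whose columns are indexed by pairs $(\ell,j)$ with $1\le\ell\le n$, $1\le j\le e_\ell$ (ordered lexicographically) and rows by $i=0,\ldots,N-1$, with $(i,(\ell,j))$ entry the coefficient of $x^i$ in $f/(x-r_\ell)^j$; equivalently $\Sigma(f)^\intercal$ is the change-of-basis matrix from the monomial basis $\{1,x,\ldots,x^{N-1}\}$ of $k[x]/(f)$ to the Newton basis $\{f/(x-r_\ell)^j\}$. The duplicant is $\mathfrak{D}(f):=(\det\Sigma(f))^2$. *)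

(* Defs.v *)
From HB Require Import structures.
From mathcomp Require Import all_boot all_order all_algebra.
Set Implicit Arguments. Unset Strict Implicit. Unset Printing Implicit Defensive.
Import GRing.Theory.
Local Open Scope ring_scope.

Definition polyf (k : fieldType) (n : nat) (r : 'I_n -> k) (e : 'I_n -> nat)
  : {poly k} := \prod_(i < n) ('X - (r i)%:P) ^+ e i.

Definition Ndeg (n : nat) (e : 'I_n -> nat) : nat := (\sum_(i < n) e i)%N.

(* Column labels (l, j), 1 <= j <= e_l, in lexicographic order; we record
   the root r_l together with the exponent j. *)
Definition col_labels (k : fieldType) (n : nat) (r : 'I_n -> k) (e : 'I_n -> nat)
  : seq (k * nat) :=
  flatten [seq [seq (r l, j) | j <- iota 1 (e l)] | l <- enum 'I_n].

Definition Sigma (k : fieldType) (n : nat) (r : 'I_n -> k) (e : 'I_n -> nat)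
  : 'M[k]_(Ndeg e) :=
  \matrix_(i < Ndeg e, c < Ndeg e)
    let lj := nth (0, 0%N) (col_labels r e) c in
    (polyf r e %/ ('X - lj.1%:P) ^+ lj.2)`_i.

Definition duplicant (k : fieldType) (n : nat) (r : 'I_n -> k) (e : 'I_n -> nat)
  : k := (\det (Sigma r e)) ^+ 2.

(* Main.v *)
Require Import Defs.
From HB Require Import structures.
From mathcomp Require Import all_boot all_order all_algebra.
From mathcomp Require Import fingroup perm zify ring.
Import GRing.Theory.
Local Open Scope ring_scope.

Set Implicit Arguments. Unset Strict Implicit. Unset Printing Implicit Defensive.

Definition fs (k : fieldType) (s : seq (k * nat)) : {poly k} :=
  \prod_(p <- s) ('X - p.1%:P) ^+ p.2.
Definition Ns (k : fieldType) (s : seq (k * nat)) : nat := sumn (map snd s).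
Definition labs (k : fieldType) (s : seq (k * nat)) : seq (k * nat) :=
  flatten [seq [seq (p.1, j) | j <- iota 1 p.2] | p <- s].
Definition pss (k : fieldType) (s : seq (k * nat)) : seq {poly k} :=
  [seq fs s %/ ('X - lj.1%:P) ^+ lj.2 | lj <- labs s].
Definition Dm (k : fieldType) (N : nat) (ps : seq {poly k}) : k :=
  \det (\matrix_(i < N, c < N) (ps`_c)`_i).
Fixpoint Ps (k : fieldType) (s : seq (k * nat)) : k :=
  if s is p :: t then
    (\prod_(q <- t) (p.1 - q.1) ^+ (p.2 * q.2)) * Ps t
  else 1.
Definition shp (k : fieldType) (a : k) (p : k * nat) := (p.1 - a, p.2).

Lemma fs_cons (k : fieldType) a e (t : seq (k * nat)) :
  fs ((a, e) :: t) = ('X - a%:P) ^+ e * fs t.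
Proof. by rewrite /fs big_cons. Qed.

Lemma size_labs (k : fieldType) (s : seq (k * nat)) : size (labs s) = Ns s.
Proof.
elim: s => [|[a e] t IH] //=.
by rewrite /labs /= size_cat size_map size_iota -/(labs t) IH.
Qed.

Lemma size_fs (k : fieldType) (s : seq (k * nat)) : size (fs s) = (Ns s).+1.
Proof.
elim: s => [|[a e] t IH]; first by rewrite /fs big_nil size_poly1.
have H1 : ('X - a%:P) ^+ e != 0 by rewrite expf_neq0 // polyXsubC_eq0.
have H2 : fs t != 0 by rewrite -size_poly_gt0 IH.
by rewrite fs_cons size_mul // size_exp_XsubC IH /Ns /=; lia.
Qed.

Lemma labs_dvd (k : fieldType) (s : seq (k * nat)) lj :
  lj \in labs s -> [/\ ('X - lj.1%:P) ^+ lj.2 %| fs s & (1 <= lj.2)%N].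
Proof.
elim: s => [|[a e] t IH] //=.
rewrite /labs /= mem_cat -/(labs t) fs_cons => /orP [/mapP [j Hj ->] | H].
  rewrite mem_iota in Hj; case/andP: Hj => H1 H2; split => //=.
  by apply: dvdp_mulr; apply: dvdp_exp2l; rewrite -ltnS -(addn1 e) addnC.
by case: (IH H) => H1 H2; split => //; apply: dvdp_mull.
Qed.

Lemma pss_cons (k : fieldType) a e (t : seq (k * nat)) :
  pss ((a, e) :: t) =
  [seq ('X - a%:P) ^+ (e - j) * fs t | j <- iota 1 e] ++
  [seq ('X - a%:P) ^+ e * q | q <- pss t].
Proof.
rewrite /pss /labs /= map_cat -/(labs t) -map_comp; congr (_ ++ _).
  apply/eq_in_map => j; rewrite mem_iota => /andP [H1 H2] /=.
  rewrite fs_cons -{1}(subnK (_ : j <= e)%N); last by lia.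
  by rewrite exprD mulrAC mulpK // expf_neq0 // polyXsubC_eq0.
rewrite -map_comp; apply/eq_in_map => lj /labs_dvd [Hd _] /=.
by rewrite fs_cons divp_mulA.
Qed.

Lemma fs_shift (k : fieldType) (a : k) (t : seq (k * nat)) :
  fs (map (shp a) t) = fs t \Po ('X + a%:P).
Proof.
rewrite /fs big_map rmorph_prod; apply: eq_bigr => p _.
rewrite rmorphXn /= comp_polyB comp_polyX comp_polyC polyCB; congr (_ ^+ _); ring.
Qed.

Lemma labs_shift (k : fieldType) (a : k) (t : seq (k * nat)) :
  labs (map (shp a) t) = map (shp a) (labs t).
Proof.
rewrite /labs map_flatten -!map_comp; congr flatten; apply: eq_map => p /=.
by rewrite -map_comp.
Qed.

Lemma pss_shift (k : fieldType) (a : k) (t : seq (k * nat)) :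
  pss (map (shp a) t) = map (fun p => p \Po ('X + a%:P)) (pss t).
Proof.
rewrite /pss labs_shift -!map_comp; apply/eq_in_map => lj /labs_dvd [Hd _] /=.
rewrite fs_shift -{1}(divpK Hd) comp_polyM rmorphXn /= comp_polyB comp_polyX
  comp_polyC polyCB.
have -> : 'X + a%:P - lj.1%:P = 'X - (lj.1%:P - a%:P) by ring.
rewrite mulpK //.
by rewrite expf_neq0 // -polyCB polyXsubC_eq0.
Qed.

Lemma XaddC_exp (k : fieldType) (a : k) i :
  size (('X + a%:P) ^+ i) = i.+1 /\ (('X + a%:P) ^+ i)`_i = 1.
Proof.
have E : 'X + a%:P = 'X - (-a)%:P by rewrite polyCN opprK.
rewrite E size_exp_XsubC; split => //.
have /monicP := monic_exp i (monicXsubC (-a)).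
by rewrite /lead_coef size_exp_XsubC.
Qed.

Lemma Dm_shift (k : fieldType) N (ps : seq {poly k}) (a : k) :
  all (fun p : {poly k} => (size p <= N)%N) ps ->
  Dm N (map (fun p => p \Po ('X + a%:P)) ps) = Dm N ps.
Proof.
move=> H.
pose T := \matrix_(i < N, j < N) (('X + a%:P) ^+ j)`_i.
have eq : \matrix_(i < N, c < N) ((map (fun p => p \Po ('X + a%:P)) ps)`_c)`_i
    = T *m \matrix_(i < N, c < N) (ps`_c)`_i.
  apply/matrixP => i c; rewrite !mxE.
  have [hc|hc] := ltnP c (size ps); last first.
    rewrite (@nth_default _ 0 (map _ ps) c) ?size_map // coef0 big1 // => j _.
    by rewrite !mxE (@nth_default _ 0 ps c) // coef0 mulr0.
  rewrite (nth_map 0) //.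
  have sp : (size (ps`_c)%R <= N)%N by move/allP: H; apply; apply: mem_nth.
  rewrite comp_polyE coef_sum.
  rewrite (big_ord_widen N (fun j => (ps`_c`_j *: ('X + a%:P) ^+ j)`_i)) //.
  rewrite big_mkcond /=; apply: eq_bigr => j _; rewrite !mxE coefZ mulrC.
  by case: ltnP => // hj; rewrite [ps`_c`_j]nth_default ?mulr0.
rewrite /Dm eq det_mulmx.
suff -> : \det T = 1 by rewrite mul1r.
rewrite -det_tr det_trig.
  by apply: big1 => i _; rewrite !mxE; case: (XaddC_exp a i).
apply/is_trig_mxP => i j hij; rewrite !mxE nth_default //.
by case: (XaddC_exp a i) => ->.
Qed.

Lemma Dm_block (k : fieldType) e M (h : {poly k}) (B : seq {poly k}) :
  size B = M ->
  exists b : bool,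
    Dm (e + M) ([seq 'X^(e - j) * h | j <- iota 1 e] ++ [seq 'X^e * q | q <- B])
    = (-1) ^+ b * h`_0 ^+ e * Dm M B.
Proof.
move=> sB.
pose Q0 := \matrix_(i < e, c < e) ('X^c * h)`_i.
pose Q := \matrix_(i < e, c < e) ('X^(e - c.+1) * h)`_i.
pose R := \matrix_(i < M, c < e) ('X^(e - c.+1) * h)`_(e + i).
pose S := \matrix_(i < M, c < M) (B`_c)`_i.
have E : \matrix_(i < e + M, c < e + M)
    (([seq 'X^(e - j) * h | j <- iota 1 e] ++ [seq 'X^e * q | q <- B])`_c)`_i
    = block_mx Q 0 R S.
  apply/matrixP => i c; rewrite !mxE.
  case: splitP => i' Hi; rewrite !mxE; case: splitP => c' Hc; rewrite !mxE Hi Hc.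
  - by rewrite nth_cat size_map size_iota ltn_ord (nth_map 0) ?size_iota // nth_iota.
  - by rewrite nth_cat size_map size_iota ltnNge leq_addr /= addKn (nth_map 0) ?sB // coefXnM ltn_ord.
  - by rewrite nth_cat size_map size_iota ltn_ord (nth_map 0) ?size_iota // nth_iota.
  - by rewrite nth_cat size_map size_iota ltnNge leq_addr /= addKn (nth_map 0) ?sB // coefXnM ltnNge leq_addr /= addKn.
have EQ : Q = col_perm (perm (@rev_ord_inj e)) Q0.
  by apply/matrixP => i c; rewrite !mxE permE.
have dQ0 : \det Q0 = h`_0 ^+ e.
  rewrite det_trig; last by apply/is_trig_mxP => i j hij; rewrite mxE coefXnM hij.
  by rewrite (eq_bigr (fun _ => h`_0)) ?prodr_const ?card_ord // => i _; rewrite mxE coefXnM ltnn subnn.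
exists (odd_perm (perm (@rev_ord_inj e))^-1).
by rewrite /Dm E det_lblock EQ col_permE det_mulmx det_perm dQ0 [h`_0 ^+ e * _]mulrC.
Qed.

Lemma Ps_shift (k : fieldType) (a : k) (t : seq (k * nat)) :
  Ps (map (shp a) t) = Ps t.
Proof.
elim: t => [|p t IH] //=; rewrite IH big_map; congr (_ * _).
by apply: eq_bigr => q _ /=; congr (_ ^+ _); ring.
Qed.

Lemma pss_size (k : fieldType) (s : seq (k * nat)) :
  all (fun p : {poly k} => (size p <= Ns s)%N) (pss s).
Proof.
apply/allP => p /mapP [lj /labs_dvd [Hd H1] ->].
rewrite size_divp ?expf_neq0 ?polyXsubC_eq0 // size_fs size_exp_XsubC /=.
by rewrite leq_subLR -add1n leq_add2r.
Qed.

Lemma size_pss (k : fieldType) (s : seq (k * nat)) : size (pss s) = Ns s.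
Proof. by rewrite size_map size_labs. Qed.

Lemma horner_fs (k : fieldType) (t : seq (k * nat)) a :
  (fs t).[a] = \prod_(q <- t) (a - q.1) ^+ q.2.
Proof.
rewrite /fs horner_prod; apply: eq_bigr => q _.
by rewrite horner_exp hornerXsubC.
Qed.

Lemma main_seq (k : fieldType) n : forall s : seq (k * nat), size s = n ->
  exists b : bool, Dm (Ns s) (pss s) = (-1) ^+ b * Ps s.
Proof.
elim: n => [|n IH] [|[a e] t] //=.
  by move=> _; exists false; rewrite /Dm det_mx00 expr0 mul1r.
move=> [Hs].
set t' := map (shp a) t.
have [b Hb] := IH t' (etrans (size_map _ _) Hs).
have NsE : Ns ((a, e) :: t) = (e + Ns t')%N by rewrite /Ns /= -map_comp.
have HS := pss_size ((a, e) :: t); rewrite NsE in HS.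
have K : forall m, (('X - a%:P) ^+ m) \Po ('X + a%:P) = 'X^m.
  move=> m; rewrite rmorphXn /= comp_polyB comp_polyX comp_polyC.
  by congr (_ ^+ _); ring.
have E1 : map (fun p => p \Po ('X + a%:P))
    [seq ('X - a%:P) ^+ (e - j) * fs t | j <- iota 1 e]
  = [seq 'X^(e - j) * (fs t \Po ('X + a%:P)) | j <- iota 1 e].
  by rewrite -map_comp; apply: eq_map => j; rewrite /= comp_polyM K.
have E2 : map (fun p => p \Po ('X + a%:P)) [seq ('X - a%:P) ^+ e * q | q <- pss t]
  = [seq 'X^e * q | q <- pss t'].
  by rewrite /t' pss_shift -!map_comp; apply: eq_map => q; rewrite /= comp_polyM K.
rewrite NsE -(Dm_shift a HS) pss_cons map_cat E1 E2.
have [b2 ->] := Dm_block e (fs t \Po ('X + a%:P)) (size_pss t').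
rewrite Hb /t' Ps_shift.
exists (b2 (+) b); rewrite signr_addb /=.
rewrite -horner_coef0 horner_comp hornerD hornerX hornerC add0r horner_fs.
rewrite -prodrXl (eq_bigr (fun q => (a - q.1) ^+ (e * q.2))); last first.
  by move=> q _; rewrite -exprM mulnC.
ring.
Qed.

Lemma Ps_ord (k : fieldType) n (r : 'I_n -> k) (e : 'I_n -> nat) :
  Ps [seq (r l, e l) | l <- enum 'I_n] =
  \prod_(i < n) \prod_(j < n | (i < j)%N) (r i - r j) ^+ (e i * e j).
Proof.
elim: n r e => [|n IH] r e.
  have -> : enum 'I_0 = [::] by apply/size0nil; rewrite size_enum_ord.
  by rewrite big_ord0.
rewrite enum_ordSl /= -map_comp (IH (fun l => r (lift ord0 l)) (fun l => e (lift ord0 l))).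
rewrite big_ord_recl; congr (_ * _).
  rewrite big_map big_enum /= [RHS]big_mkcond big_ord_recl /= mul1r.
  by apply: eq_big => // j.
apply: eq_bigr => i _; rewrite [RHS]big_mkcond big_ord_recl /= mul1r [LHS]big_mkcond.
by apply: eq_bigr => j _.
Qed.

Theorem mainTheorem10 (k : fieldType) (n : nat) (r : 'I_n -> k)
    (e : 'I_n -> nat) :
  injective r -> (forall i, (1 <= e i)%N) ->
  (exists s : bool,
     \det (Sigma r e) =
       (-1) ^+ s * \prod_(i < n) \prod_(j < n | (i < j)%N)
                     (r i - r j) ^+ (e i * e j)) /\
  duplicant r e =
    \prod_(i < n) \prod_(j < n | (i < j)%N) (r i - r j) ^+ (2 * (e i * e j)).
Proof.
move=> _ _.
set s := [seq (r l, e l) | l <- enum 'I_n].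
have Hf : polyf r e = fs s by rewrite /polyf /fs big_map big_enum.
have Hl : col_labels r e = labs s by rewrite /labs /s -map_comp.
have HN : Ndeg e = Ns s by rewrite /Ndeg /Ns -map_comp sumnE big_map big_enum; apply: eq_big.
have Hdet : \det (Sigma r e) = Dm (Ns s) (pss s).
  rewrite -HN /Dm; congr (\det _); apply/matrixP => i c; rewrite !mxE Hf Hl.
  by rewrite (nth_map (0, 0%N)) // size_labs -HN.
have [b Hb] := main_seq (erefl (size s)).
split; first by exists b; rewrite Hdet Hb Ps_ord.
rewrite /duplicant Hdet Hb Ps_ord exprMn sqrr_sign mul1r -prodrXl.
apply: eq_bigr => i _; rewrite -prodrXl; apply: eq_bigr => j _.
by rewrite -exprM mulnC.
Qed.
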